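(* Let $m\in\mathbb N$. Let $\mathbf X=(X_1,\dots,X_n)$ be (possibly dependent) component lifetimes and $\mathbf Y_i=(Y_{i1},\dots,Y_{in})$, $i=1,\dots,m$, be vectors of spare lifetimes, all $X_j$ and $Y_{ij}$ identically distributed as $X$. Let $T_C=\tau(\mathbf Z)$, where $\mathbf Z=(Z_1,\dots,Z_n)$, $Z_j=\max\{X_j,Y_{1j},\dots,Y_{mj}\}$ with $X_j,Y_{1j},\dots,Y_{mj}$ independent (active redundancy at component level), and let $T_S=\max\{\tau(\mathbf X),\tau(\mathbf Y_1),\dots,\tau(\mathbf Y_m)\}$ with $\tau(\mathbf X),\tau(\mathbf Y_1),\dots,\tau(\mathbf Y_m)$ independent (active redundancy at system level), where $\tau$ is a coherent structure and $\tau(\mathbf X),\tau(\mathbf Y_i),\tau(\mathbf Z)$ all have the same domination function $h$; thus $\bar F_{T_C}(x)=h\big(1-(1-\bar F_X(x))^{m+1}\big)$ and $\bar F_{T_S}(x)=1-\big(1-h(\bar F_X(x))\big)^{m+1}$. Then $T_S\underset{c}{\prec}T_C$ (resp. $T_S\underset{c}{\succ}T_C$) holds if and only if $$\left(\frac{(1-h(p))^{m}h'(p)}{1-(1-h(p))^{m+1}}\right)\left(\frac{h\big(1-(1-p)^{m+1}\big)}{(1-p)^{m}h'\big(1-(1-p)^{m+1}\big)}\right)$$ is decreasing (resp. increasing) in $p\in(0,1)$.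
   Context: All random variables are non-negative and absolutely continuous with support $[0,\infty)$. For a random variable $W$: density $f_W$, survival $\bar F_W$, hazard rate $r_W=f_W/\bar F_W$. $U\underset{c}{\prec}V$ means $r_U(x)/r_V(x)$ is increasing in $x\ge0$; $U\underset{c}{\succ}V$ means $V\underset{c}{\prec}U$. The domination function $h:[0,1]\to[0,1]$ of a coherent system whose components have common marginal survival function $\bar G$ is the function (depending on structure and survival copula) with system reliability $h(\bar G(x))$; it is increasing, continuous, $h(0)=0$, $h(1)=1$, assumed differentiable. ''Increasing'' means non-decreasing, ''decreasing'' means non-increasing. *)

(* Defs.v *)
From Stdlib Require Import Reals.
From Coquelicot Require Import Coquelicot.
Open Scope R_scope.

Definition hazard (S : R -> R) (x : R) : R := - Derive S x / S x.

Definition cless (SU SV : R -> R) : Prop :=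
  forall x y, 0 < x -> x <= y ->
    hazard SU x / hazard SV x <= hazard SU y / hazard SV y.

Definition lifetime_survival (Fb : R -> R) : Prop :=
  (forall x, x <= 0 -> Fb x = 1) /\
  (forall x, continuous Fb x) /\
  (forall x, 0 < x -> ex_derive Fb x /\ Derive Fb x < 0) /\
  is_lim Fb p_infty 0.

Definition domination_function (h : R -> R) : Prop :=
  h 0 = 0 /\ h 1 = 1 /\
  (forall p q, 0 <= p -> p <= q -> q <= 1 -> h p <= h q) /\
  (forall p, 0 <= p <= 1 -> continuity_pt h p) /\
  (forall p, 0 < p < 1 -> ex_derive h p /\ 0 < Derive h p).

Definition surv_TC (h : R -> R) (m : nat) (Fb : R -> R) (x : R) : R :=
  h (1 - (1 - Fb x) ^ (S m)).
Definition surv_TS (h : R -> R) (m : nat) (Fb : R -> R) (x : R) : R :=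
  1 - (1 - h (Fb x)) ^ (S m).

Definition phi (h : R -> R) (m : nat) (p : R) : R :=
  ((1 - h p) ^ m * Derive h p / (1 - (1 - h p) ^ (S m))) *
  (h (1 - (1 - p) ^ (S m)) /
     ((1 - p) ^ m * Derive h (1 - (1 - p) ^ (S m)))).

Definition decreasing_on01 (g : R -> R) : Prop :=
  forall p q, 0 < p -> p <= q -> q < 1 -> g q <= g p.
Definition increasing_on01 (g : R -> R) : Prop :=
  forall p q, 0 < p -> p <= q -> q < 1 -> g p <= g q.

(* Main.v *)
Require Import Defs.
From Stdlib Require Import Reals Lra Lia.
From Coquelicot Require Import Coquelicot.
Open Scope R_scope.

Lemma h_strict (h : R -> R) (Hh : domination_function h) a b :
  0 < a -> a < b -> b < 1 -> h a < h b.
Proof.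
  destruct Hh as (H0 & H1 & Hm & Hc & Hd).
  intros Ha Hab Hb.
  destruct (MVT_gen h a b (Derive h)) as (c & Hc1 & Hc2).
  - intros x Hx. rewrite Rmin_left in Hx by lra. rewrite Rmax_right in Hx by lra.
    apply Derive_correct. apply Hd; lra.
  - intros x Hx. rewrite Rmin_left in Hx by lra. rewrite Rmax_right in Hx by lra.
    apply Hc; lra.
  - rewrite Rmin_left in Hc1 by lra. rewrite Rmax_right in Hc1 by lra.
    assert (0 < Derive h c) by (apply Hd; lra).
    assert (0 < Derive h c * (b - a)) by (apply Rmult_lt_0_compat; lra).
    lra.
Qed.

Lemma h_range (h : R -> R) (Hh : domination_function h) p :
  0 < p < 1 -> 0 < h p < 1.
Proof.
  intros Hp. pose proof (h_strict h Hh) as Hs.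
  destruct Hh as (H0 & H1 & Hm & Hc & Hd).
  split.
  - assert (h 0 <= h (p/2)) by (apply Hm; lra).
    assert (h (p/2) < h p) by (apply Hs; lra). lra.
  - assert (h ((1+p)/2) <= h 1) by (apply Hm; lra).
    assert (h p < h ((1+p)/2)) by (apply Hs; lra). lra.
Qed.

Lemma F_strict (Fb : R -> R) (HF : lifetime_survival Fb) a b :
  0 < a -> a < b -> Fb b < Fb a.
Proof.
  destruct HF as (H0 & Hc & Hd & Hl).
  intros Ha Hab.
  destruct (MVT_gen Fb a b (Derive Fb)) as (c & Hc1 & Hc2).
  - intros x Hx. rewrite Rmin_left in Hx by lra. rewrite Rmax_right in Hx by lra.
    apply Derive_correct. apply Hd; lra.
  - intros x Hx. apply continuity_pt_filterlim. apply Hc.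
  - rewrite Rmin_left in Hc1 by lra. rewrite Rmax_right in Hc1 by lra.
    assert (Derive Fb c < 0) by (apply Hd; lra).
    assert (Derive Fb c * (b - a) < 0).
    { assert (0 < - Derive Fb c * (b - a)) by (apply Rmult_lt_0_compat; lra). lra. }
    lra.
Qed.

Lemma F_lt1 (Fb : R -> R) (HF : lifetime_survival Fb) x : 0 < x -> Fb x < 1.
Proof.
  intros Hx.
  pose proof (F_strict Fb HF) as Hs.
  destruct HF as (H0 & Hc & Hd & Hl).
  destruct (Rlt_or_le (Fb x) 1) as [|Hge]; auto. exfalso.
  set (s := x/2).
  assert (Hs1 : Fb x < Fb s) by (apply Hs; unfold s; lra).
  pose proof (Hc 0) as C0. assert (F0 : Fb 0 = 1) by (apply H0; lra). unfold continuous in C0. rewrite F0 in C0.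
  assert (Hpos : 0 < Fb s - 1) by lra.
  pose proof (C0 (ball 1 (mkposreal _ Hpos)) (locally_ball _ _)) as C1.
  simpl in C1. destruct C1 as [d Hd']. pose proof (cond_pos d) as dpos.
  set (t := Rmin (d/2) (s/2)).
  assert (0 < t) by (unfold t; apply Rmin_glb_lt; unfold s; lra).
  assert (t < s) by (unfold t; pose proof (Rmin_r (d/2) (s/2)); unfold s in *; lra).
  assert (Hb : ball 0 d t).
  { unfold t. change (Rabs (Rmin (d/2) (s/2) - 0) < d).
    fold t. rewrite Rminus_0_r. rewrite Rabs_right by lra.
    unfold t. pose proof (Rmin_l (d/2) (s/2)); lra. }
  specialize (Hd' t Hb). change (Rabs (Fb t - 1) < Fb s - 1) in Hd'.
  assert (Fb s < Fb t) by (apply Hs; lra).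
  apply Rabs_def2 in Hd'. lra.
Qed.

Lemma F_gt0 (Fb : R -> R) (HF : lifetime_survival Fb) x : 0 < x -> 0 < Fb x.
Proof.
  intros Hx.
  pose proof (F_strict Fb HF) as Hs.
  destruct HF as (H0 & Hc & Hd & Hl).
  destruct (Rlt_or_le 0 (Fb x)) as [|Hle]; auto. exfalso.
  assert (H1 : Fb (x+1) < Fb x) by (apply Hs; lra).
  apply is_lim_spec in Hl.
  assert (Hpos : 0 < - Fb (x+1) / 2) by lra.
  destruct (Hl (mkposreal _ Hpos)) as [M HM]. simpl in HM.
  set (y := Rmax M (x+1) + 1).
  assert (M < y) by (unfold y; pose proof (Rmax_l M (x+1)); lra).
  assert (x + 1 < y) by (unfold y; pose proof (Rmax_r M (x+1)); lra).
  specialize (HM y H). rewrite Rminus_0_r in HM. apply Rabs_def2 in HM.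
  assert (Fb y < Fb (x+1)) by (apply Hs; lra). lra.
Qed.

Lemma F_onto (Fb : R -> R) (HF : lifetime_survival Fb) q :
  0 < q < 1 -> exists x, 0 < x /\ Fb x = q.
Proof.
  intros Hq.
  destruct HF as (H0 & Hc & Hd & Hl).
  pose proof Hl as Hl'. apply is_lim_spec in Hl'.
  destruct (Hl' (mkposreal q (proj1 Hq))) as [M HM]. simpl in HM.
  set (b := Rmax M 0 + 1).
  assert (M < b) by (unfold b; pose proof (Rmax_l M 0); lra).
  assert (0 < b) by (unfold b; pose proof (Rmax_r M 0); lra).
  specialize (HM b H). rewrite Rminus_0_r in HM. apply Rabs_def2 in HM.
  assert (Hcont : continuity Fb).
  { intros z. apply continuity_pt_filterlim. apply Hc. }
  assert (Hf0 : Fb 0 = 1) by (apply H0; lra).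
  destruct (IVT_gen Fb 0 b q Hcont) as [x [Hx1 Hx2]].
  - rewrite Hf0. rewrite Rmin_right by lra. rewrite Rmax_left by lra. lra.
  - exists x. rewrite Rmin_left in Hx1 by lra.
    split; auto. destruct (Req_dec x 0) as [E|E].
    + subst. lra.
    + lra.
Qed.

Lemma DS (m : nat) (h Fb : R -> R) (Hh : domination_function h)
  (HF : lifetime_survival Fb) x : 0 < x ->
  Derive (surv_TS h m Fb) x =
  INR (S m) * (1 - h (Fb x)) ^ m * Derive h (Fb x) * Derive Fb x.
Proof.
  intros Hx. apply is_derive_unique. unfold surv_TS.
  pose proof (F_lt1 Fb HF x Hx). pose proof (F_gt0 Fb HF x Hx).
  destruct Hh as (K0 & K1 & Hm & Hc & Hd).
  destruct HF as (G0 & Gc & Gd & Gl).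
  auto_derive.
  - split; [apply Hd; lra|split; [apply Gd; lra|tauto]].
  - change (match m with 0%nat => 1 | S _ => INR m + 1 end) with (INR (S m)).
    change (Derive (fun x0 : R => Fb x0) x) with (Derive Fb x).
    change (Derive (fun x0 : R => h x0) (Fb x)) with (Derive h (Fb x)).
    replace (1 + - h (Fb x)) with (1 - h (Fb x)) by ring. generalize ((1 - h (Fb x))^m) (INR (S m)); intros A B; ring.
Qed.

Lemma DC (m : nat) (h Fb : R -> R) (Hh : domination_function h)
  (HF : lifetime_survival Fb) x : 0 < x ->
  Derive (surv_TC h m Fb) x =
  Derive h (1 - (1 - Fb x) ^ (S m)) * (INR (S m) * (1 - Fb x) ^ m * Derive Fb x).
Proof.
  intros Hx. apply is_derive_unique. unfold surv_TC.
  pose proof (F_lt1 Fb HF x Hx). pose proof (F_gt0 Fb HF x Hx).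
  assert (0 < 1 - Fb x < 1) by lra.
  assert (0 < (1 - Fb x) ^ S m) by (apply pow_lt; lra).
  assert ((1 - Fb x) ^ S m < 1) by (apply pow_lt_1_compat; [lra| lia]).
  destruct Hh as (K0 & K1 & Hm & Hc & Hd).
  destruct HF as (G0 & Gc & Gd & Gl).
  auto_derive.
  - repeat split; try (apply Gd; lra). apply Hd. replace (1 + - Fb x) with (1 - Fb x) by ring. simpl in H2, H3. lra.
  - change (match m with 0%nat => 1 | S _ => INR m + 1 end) with (INR (S m)).
    change (Derive (fun x0 : R => Fb x0) x) with (Derive Fb x).
    change (fun x0 : R => h x0) with h.
    replace (1 + - Fb x) with (1 - Fb x) by ring. replace (1 + - ((1 - Fb x) * (1 - Fb x) ^ m)) with (1 - (1 - Fb x) ^ S m) by (simpl; ring).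
    generalize ((1 - Fb x)^m) (INR (S m)) (Derive h (1 - (1 - Fb x) ^ S m)); intros A B C; ring.
Qed.

Lemma phi_pos (m : nat) (h : R -> R) (Hh : domination_function h) p :
  0 < p < 1 -> 0 < phi h m p.
Proof.
  intros Hp. unfold phi.
  pose proof (h_range h Hh p Hp) as Hr.
  assert (0 < 1 - p < 1) by lra.
  assert (0 < (1 - p) ^ S m) by (apply pow_lt; lra).
  assert ((1 - p) ^ S m < 1) by (apply pow_lt_1_compat; [lra| lia]).
  assert (HG : 0 < 1 - (1 - p) ^ S m < 1) by lra.
  pose proof (h_range h Hh _ HG).
  assert (0 < (1 - h p) ^ S m) by (apply pow_lt; lra).
  assert ((1 - h p) ^ S m < 1) by (apply pow_lt_1_compat; [lra| lia]).
  assert (0 < (1 - h p) ^ m) by (apply pow_lt; lra).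
  assert (0 < (1 - p) ^ m) by (apply pow_lt; lra).
  destruct Hh as (K0 & K1 & Hm & Hc & Hd).
  assert (0 < Derive h p) by (apply Hd; lra).
  assert (0 < Derive h (1 - (1 - p) ^ S m)) by (apply Hd; lra).
  apply Rmult_lt_0_compat; apply Rdiv_lt_0_compat; try lra;
    apply Rmult_lt_0_compat; lra.
Qed.

Lemma ratio (m : nat) (h Fb : R -> R) (Hh : domination_function h)
  (HF : lifetime_survival Fb) x : 0 < x ->
  0 < hazard (surv_TC h m Fb) x /\
  hazard (surv_TS h m Fb) x = phi h m (Fb x) * hazard (surv_TC h m Fb) x.
Proof.
  intros Hx. unfold hazard. rewrite (DS m h Fb Hh HF x Hx), (DC m h Fb Hh HF x Hx).
  pose proof (F_lt1 Fb HF x Hx). pose proof (F_gt0 Fb HF x Hx).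
  set (p := Fb x) in *.
  assert (Hp : 0 < p < 1) by lra.
  pose proof (h_range h Hh p Hp) as Hr.
  assert (0 < 1 - p < 1) by lra.
  assert (0 < (1 - p) ^ S m) by (apply pow_lt; lra).
  assert ((1 - p) ^ S m < 1) by (apply pow_lt_1_compat; [lra| lia]).
  assert (HG : 0 < 1 - (1 - p) ^ S m < 1) by lra.
  pose proof (h_range h Hh _ HG).
  assert (0 < (1 - h p) ^ S m) by (apply pow_lt; lra).
  assert ((1 - h p) ^ S m < 1) by (apply pow_lt_1_compat; [lra| lia]).
  assert (0 < (1 - h p) ^ m) by (apply pow_lt; lra).
  assert (0 < (1 - p) ^ m) by (apply pow_lt; lra).
  assert (0 < INR (S m)) by (apply lt_0_INR; lia).
  assert (Hdf : Derive Fb x < 0) by (apply HF; lra).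
  destruct Hh as (K0 & K1 & Hm & Hc & Hd).
  assert (0 < Derive h p) by (apply Hd; lra).
  assert (0 < Derive h (1 - (1 - p) ^ S m)) by (apply Hd; lra).
  unfold surv_TS, surv_TC, phi. fold p.
  split.
  - apply Rdiv_lt_0_compat; [|lra].
    assert (0 < Derive h (1 - (1 - p) ^ S m) * (INR (S m) * (1 - p) ^ m * - Derive Fb x)).
    { apply Rmult_lt_0_compat; [lra|]. apply Rmult_lt_0_compat; [|lra].
      apply Rmult_lt_0_compat; lra. }
    lra.
  - generalize dependent (Derive h (1 - (1 - p) ^ S m)).
    generalize dependent (h (1 - (1 - p) ^ S m)).
    generalize dependent ((1 - h p) ^ S m).
    generalize dependent ((1 - h p) ^ m).
    generalize dependent ((1 - p) ^ m).
    generalize dependent (INR (S m)).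
    intros. field. repeat split; lra.
Qed.

Lemma core (Fb : R -> R) (HF : lifetime_survival Fb) (psi : R -> R) :
  (forall x y, 0 < x -> x <= y -> psi (Fb x) <= psi (Fb y)) <->
  (forall p q, 0 < p -> p <= q -> q < 1 -> psi q <= psi p).
Proof.
  split.
  - intros H p q Hp Hpq Hq.
    destruct (F_onto Fb HF p) as [y [Hy Ey]]; [lra|].
    destruct (F_onto Fb HF q) as [x [Hx Ex]]; [lra|].
    destruct (Rle_or_lt x y) as [Hxy|Hxy].
    + rewrite <- Ey, <- Ex. apply H; auto.
    + pose proof (F_strict Fb HF y x Hy Hxy). lra.
  - intros H x y Hx Hxy.
    destruct (Req_dec x y) as [E|E]; [subst; lra|].
    pose proof (F_strict Fb HF x y Hx ltac:(lra)).
    pose proof (F_lt1 Fb HF x Hx). pose proof (F_gt0 Fb HF y ltac:(lra)).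
    apply H; lra.
Qed.

Theorem theorem4p1 (m : nat) (h : R -> R) (Fb : R -> R)
  (Hh : domination_function h) (HF : lifetime_survival Fb) :
  (cless (surv_TS h m Fb) (surv_TC h m Fb) <-> decreasing_on01 (phi h m)) /\
  (cless (surv_TC h m Fb) (surv_TS h m Fb) <-> increasing_on01 (phi h m)).
Proof.
  assert (R1 : forall x, 0 < x ->
     hazard (surv_TS h m Fb) x / hazard (surv_TC h m Fb) x = phi h m (Fb x)).
  { intros x Hx. destruct (ratio m h Fb Hh HF x Hx) as [P E]. rewrite E. field. lra. }
  assert (R2 : forall x, 0 < x ->
     hazard (surv_TC h m Fb) x / hazard (surv_TS h m Fb) x = / phi h m (Fb x)).
  { intros x Hx. destruct (ratio m h Fb Hh HF x Hx) as [P E].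
    pose proof (phi_pos m h Hh (Fb x) (conj (F_gt0 Fb HF x Hx) (F_lt1 Fb HF x Hx))).
    rewrite E. field. lra. }
  split.
  - unfold cless, decreasing_on01.
    rewrite <- (core Fb HF (phi h m)).
    split; intros H x y Hx Hxy; specialize (H x y Hx Hxy);
      rewrite ?R1 in H by lra; rewrite ?R1 by lra; exact H.
  - unfold cless, increasing_on01.
    transitivity (forall p q, 0 < p -> p <= q -> q < 1 -> / phi h m q <= / phi h m p).
    + rewrite <- (core Fb HF (fun p => / phi h m p)).
      split; intros H x y Hx Hxy; specialize (H x y Hx Hxy);
        rewrite ?R2 in H by lra; rewrite ?R2 by lra; exact H.
    + split; intros H p q Hp Hpq Hq; specialize (H p q Hp Hpq Hq);
        pose proof (phi_pos m h Hh p ltac:(lra));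
        pose proof (phi_pos m h Hh q ltac:(lra)).
      * rewrite <- (Rinv_inv (phi h m p)), <- (Rinv_inv (phi h m q)).
        apply Rinv_le_contravar; auto. apply Rinv_0_lt_compat; auto.
      * apply Rinv_le_contravar; auto.
Qed.
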